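(* Let $F_1,F_2$ be bijections of $\mathbb F_2^m$ with $F_1(0)=F_2(0)=0$ such that the self-embeddings $S\cup F_1(S)$ and $S\cup F_2(S)$ are isomorphic, where $S=STS(\mathcal H^n)$. Then $F_1$ and $F_2$ are CCZ-equivalent.
   Context: $n=2^m-1$; identify $\mathbb F_2^m$ with $GF(2^m)$. $S=STS(\mathcal H^n)$ is the set of 3-subsets $\{a,b,c\}$ of nonzero elements with $a+b+c=0$; $F(S)=\{\{F(a),F(b),F(c)\}:\{a,b,c\}\in S\}$. Self-embeddings $S\cup F_1(S)$, $S\cup F_2(S)$ are isomorphic if there is a permutation $\sigma$ of the nonzero elements with either $\sigma(S)=S,\sigma(F_1(S))=F_2(S)$ or $\sigma(S)=F_2(S),\sigma(F_1(S))=S$. $\mathcal C_F$ is the binary linear code of length $n$ with parity-check matrix whose columns are $\binom{x}{F(x)}$ for nonzero $x\in\mathbb F_2^m$; $\mathcal C_F^*$ is its extension by an overall parity-check bit. $F_1,F_2$ are called CCZ-equivalent if $\mathcal C^*_{F_1}$ and $\mathcal C^*_{F_2}$ are equivalent codes (one obtained from the other by a coordinate permutation). *)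

(* Defs.v *)
From HB Require Import structures.
From mathcomp Require Import all_boot all_order all_algebra.
From mathcomp Require Import perm.
Set Implicit Arguments. Unset Strict Implicit. Unset Printing Implicit Defensive.
Import GRing.Theory.
Local Open Scope ring_scope.


(* Nonzero elements of F_2^m: the n = 2^m - 1 points / code coordinates. *)
Definition NZ (m : nat) : finType := {x : 'rV['F_2]_m | x != 0}.

Definition STS (m : nat) : {set {set 'rV['F_2]_m}} :=
  [set B : {set 'rV['F_2]_m} |
     [&& #|B| == 3, (0 : 'rV['F_2]_m) \notin B & \sum_(x in B) x == 0]].

Definition blocks_img (m : nat) (F : 'rV['F_2]_m -> 'rV['F_2]_m)
    (S : {set {set 'rV['F_2]_m}}) : {set {set 'rV['F_2]_m}} :=
  (fun B : {set 'rV['F_2]_m} => F @: B) @: S.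

(* Isomorphism of the self-embeddings S u F1(S) and S u F2(S):
   a permutation sigma of the nonzero elements (i.e. a permutation of
   F_2^m fixing 0) with sigma(S) = S, sigma(F1 S) = F2 S, or
   sigma(S) = F2 S, sigma(F1 S) = S. *)
Definition self_emb_iso (m : nat) (F1 F2 : 'rV['F_2]_m -> 'rV['F_2]_m) : Prop :=
  exists sigma : {perm 'rV['F_2]_m}, sigma 0 = 0 /\
   ((blocks_img sigma (STS m) = STS m /\
     blocks_img sigma (blocks_img F1 (STS m)) = blocks_img F2 (STS m)) \/
    (blocks_img sigma (STS m) = blocks_img F2 (STS m) /\
     blocks_img sigma (blocks_img F1 (STS m)) = STS m)).

(* C_F: binary linear code with coordinates indexed by nonzero x, and
   parity-check matrix with columns (x ; F x). A word c is in C_F iff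
   sum_x c_x x = 0 and sum_x c_x F(x) = 0. *)
Definition code_CF (m : nat) (F : 'rV['F_2]_m -> 'rV['F_2]_m) :
    {set {ffun NZ m -> 'F_2}} :=
  [set c : {ffun NZ m -> 'F_2} |
     (\sum_(x : NZ m) c x *: val x == 0) &&
     (\sum_(x : NZ m) c x *: F (val x) == 0)].

(* C_F^*: extension by an overall parity-check bit; the extra coordinate
   is None. *)
Definition code_CF_ext (m : nat) (F : 'rV['F_2]_m -> 'rV['F_2]_m) :
    {set {ffun option (NZ m) -> 'F_2}} :=
  [set c : {ffun option (NZ m) -> 'F_2} |
     ([ffun x : NZ m => c (Some x)] \in code_CF F) &&
     (\sum_(i : option (NZ m)) c i == 0)].

Definition equiv_codes (I : finType) (C1 C2 : {set {ffun I -> 'F_2}}) : Prop :=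
  exists pi : {perm I},
    C2 = (fun c : {ffun I -> 'F_2} => [ffun i => c (pi i)]) @: C1.

Definition CCZ_equiv (m : nat) (F1 F2 : 'rV['F_2]_m -> 'rV['F_2]_m) : Prop :=
  equiv_codes (code_CF_ext F1) (code_CF_ext F2).

(* Main.v *)
Require Import Defs.
From HB Require Import structures.
From mathcomp Require Import all_boot all_order all_algebra.
From mathcomp Require Import perm.
Import GRing.Theory.
Local Open Scope ring_scope.
Set Implicit Arguments.

Lemma F2_cases (c : 'F_2) : c = 0 \/ c = 1.
Proof. case: c => [[|[|n]] Hn]; [left|right|]; try by apply/val_inj. by []. Qed.
Lemma two0 : (2%:R : 'F_2) = 0. Proof. by apply/val_inj. Qed.
Lemma addxx {m} (x : 'rV['F_2]_m) : x + x = 0.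
Proof. by rewrite -mulr2n -scaler_nat two0 scale0r. Qed.

Lemma sum3 {m} (a b c : 'rV['F_2]_m) : a \notin b |: [set c] -> b != c ->
  \sum_(x in a |: (b |: [set c])) x = a + (b + c).
Proof. by move=> ha hb; rewrite big_setU1 //= big_setU1 ?inE //= big_set1. Qed.

Lemma card3 {m} (a b c : 'rV['F_2]_m) : a \notin b |: [set c] -> b != c ->
  #|a |: (b |: [set c])| = 3%N.
Proof. by move=> ha hb; rewrite cardsU1 ha cardsU1 inE hb cards1. Qed.

Lemma oppxx {m} (x : 'rV['F_2]_m) : - x = x.
Proof. by rewrite -[LHS]add0r -(addxx x) addrK. Qed.

Lemma STS_additive {m} (f : 'rV['F_2]_m -> 'rV['F_2]_m) :
  injective f -> f 0 = 0 ->
  (forall B, B \in STS m -> f @: B \in STS m) ->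
  forall a b, f (a + b) = f a + f b.
Proof.
move=> finj f0 hS a b.
have [->|a0] := eqVneq a 0; first by rewrite add0r f0 add0r.
have [->|b0] := eqVneq b 0; first by rewrite addr0 f0 addr0.
have [<-|ab] := eqVneq a b; first by rewrite !addxx f0.
have hab1 : a + b != a by rewrite -subr_eq0 addrAC subrr add0r.
have hab2 : a + b != b by rewrite -subr_eq0 -addrA subrr addr0.
have hab0 : a + b != 0 by rewrite -[b]oppxx subr_eq0.
have ha : a \notin b |: [set a + b].
  by rewrite !inE negb_or ab eq_sym hab1.
have hbb : b != a + b by rewrite eq_sym.
have hB : a |: (b |: [set a + b]) \in STS m.
  rewrite inE card3 // sum3 // addrA addxx eqxx /=.
  by rewrite !inE !negb_or !(eq_sym 0) a0 b0 hab0 eqxx.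
move: (hS _ hB); rewrite !imsetU1 imset_set1 inE => /and3P[_ _].
have hfa : f a \notin f b |: [set f (a + b)].
  by rewrite !inE !(inj_eq finj) negb_or ab eq_sym hab1.
rewrite sum3 ?(inj_eq finj) // addrA => /eqP h.
by rewrite -[f (a + b)]oppxx -[LHS]add0r -h addrK.
Qed.

Lemma add_sum {m} (f : 'rV['F_2]_m -> 'rV['F_2]_m) :
  (forall a b, f (a + b) = f a + f b) -> f 0 = 0 ->
  forall (I : finType) (c : I -> 'F_2) (v : I -> 'rV['F_2]_m),
  f (\sum_i c i *: v i) = \sum_i c i *: f (v i).
Proof.
move=> fD f0 I c v; rewrite (big_morph f fD f0); apply: eq_bigr => i _.
by case: (F2_cases (c i)) => ->; rewrite ?scale0r ?scale1r.
Qed.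

Lemma inj0 {m} (f : 'rV['F_2]_m -> 'rV['F_2]_m) x :
  injective f -> f 0 = 0 -> (f x == 0) = (x == 0).
Proof. by move=> fi f0; rewrite -{1}f0 (inj_eq fi). Qed.

Lemma CCZ_of {m} (F1 F2 : 'rV['F_2]_m -> 'rV['F_2]_m) (h : NZ m -> NZ m) :
  injective h ->
  (forall c : NZ m -> 'F_2,
     ((\sum_x c x *: val x == 0) && (\sum_x c x *: F1 (val x) == 0)) =
     ((\sum_x c x *: val (h x) == 0) && (\sum_x c x *: F2 (val (h x)) == 0))) ->
  CCZ_equiv F1 F2.
Proof.
move=> hinj hc.
pose hp := perm hinj.
pose g (o : option (NZ m)) := omap (hp^-1)%g o.
have ginj : injective g.
  by case=> [x|] [y|] //= [] /perm_inj ->.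
pose pi := perm ginj.
have key : forall c, (c \in code_CF_ext F1) = ([ffun i => c (pi i)] \in code_CF_ext F2).
  move=> c; rewrite !inE.
  have -> : \sum_i [ffun i => c (pi i)] i = \sum_i c i.
    rewrite (reindex_inj (@perm_inj _ pi^-1)%g) /=.
    by apply: eq_bigr => i _; rewrite ffunE permKV.
  congr andb.
  rewrite (hc (fun x => [ffun x0 => c (Some x0)] x)).
  by congr andb; congr (_ == 0); rewrite [RHS](reindex_inj (@perm_inj _ hp));
    apply: eq_bigr => y _; rewrite !ffunE [pi _]permE /= permK permE.
exists pi; apply/setP => d; apply/idP/imsetP.
  move=> dC.
  exists [ffun i => d ((pi^-1)%g i)].
    rewrite key; suff -> : [ffun i => [ffun i => d ((pi^-1)%g i)] (pi i)] = d by [].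
    by apply/ffunP => i; rewrite !ffunE permK.
  by apply/ffunP => i; rewrite !ffunE permK.
by case=> c cC ->; rewrite -key.
Qed.

Lemma nz_pf {m} (f : 'rV['F_2]_m -> 'rV['F_2]_m) (fi : injective f) (f0 : f 0 = 0)
  (x : NZ m) : f (val x) != 0.
Proof. by rewrite inj0 // (valP x). Qed.

Definition mkNZ {m} (f : 'rV['F_2]_m -> 'rV['F_2]_m) (fi : injective f) (f0 : f 0 = 0)
  (x : NZ m) : NZ m := exist (fun y => y != 0) (f (val x)) (nz_pf fi f0 x).

Lemma mkNZ_inj {m} (f : 'rV['F_2]_m -> 'rV['F_2]_m) (fi : injective f) (f0 : f 0 = 0) :
  injective (mkNZ fi f0).
Proof. by move=> x y /(congr1 val) /= /fi /val_inj. Qed.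

Lemma blocks_mem {m} (f : 'rV['F_2]_m -> 'rV['F_2]_m) (S : {set {set 'rV['F_2]_m}}) B :
  B \in S -> f @: B \in blocks_img f S.
Proof. by move=> hB; apply: imset_f. Qed.

Lemma blocks_back {m} (F g : 'rV['F_2]_m -> 'rV['F_2]_m) :
  cancel F g -> forall B', B' \in blocks_img F (STS m) -> g @: B' \in STS m.
Proof.
move=> Fg B' /imsetP[B hB ->].
by rewrite -imset_comp (eq_imset _ Fg) imset_id.
Qed.

Unset Implicit Arguments.

Theorem mainTheorem12 (m : nat) (F1 F2 : 'rV['F_2]_m -> 'rV['F_2]_m) :
  bijective F1 -> bijective F2 -> F1 0 = 0 -> F2 0 = 0 ->
  self_emb_iso F1 F2 -> CCZ_equiv F1 F2.
Proof.
move=> [g1 F1g F1g'] [g2 F2g F2g'] F10 F20 [s [s0 [[hS hF]|[hS hF]]]].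
- have F1i := can_inj F1g; have g2i := can_inj F2g'.
  have g20 : g2 0 = 0 by rewrite -F20 F2g.
  have si : injective s := @perm_inj _ s.
  pose tau := g2 \o s \o F1.
  have ti : injective tau by apply: inj_comp => //; apply: inj_comp.
  have t0 : tau 0 = 0 by change (g2 (s (F1 0)) = 0); rewrite F10 s0 g20.
  have tS : forall B, B \in STS m -> tau @: B \in STS m.
    move=> B hB; have -> : tau @: B = g2 @: (s @: (F1 @: B)) by rewrite -!imset_comp.
    apply: (blocks_back F2g).
    by rewrite -hF; do 2 apply: blocks_mem.
  have sS : forall B, B \in STS m -> s @: B \in STS m.
    by move=> B hB; rewrite -hS; apply: blocks_mem.
  have tD := STS_additive ti t0 tS.
  have sD := STS_additive si s0 sS.
  apply: (CCZ_of F1 F2 (@mkNZ_inj _ _ ti t0)) => c.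
  have E : forall x, F2 (tau x) = s (F1 x) by move=> x; change (F2 (g2 (s (F1 x))) = s (F1 x)); rewrite F2g'.
  have S1 : \sum_x c x *: val (mkNZ ti t0 x) = tau (\sum_x c x *: val x).
    by rewrite (add_sum tau tD t0).
  have S2 : \sum_x c x *: F2 (val (mkNZ ti t0 x)) = s (\sum_x c x *: F1 (val x)).
    by rewrite (add_sum s sD s0); apply: eq_bigr => x _; rewrite -E.
  by rewrite S1 S2 !inj0.
- have F1i := can_inj F1g; have g2i := can_inj F2g'.
  have g20 : g2 0 = 0 by rewrite -F20 F2g.
  have si : injective s := @perm_inj _ s.
  pose A := g2 \o s.
  pose Bm := s \o F1.
  have Ai : injective A by apply: inj_comp.
  have Bi : injective Bm by apply: inj_comp.
  have A0 : A 0 = 0 by change (g2 (s 0) = 0); rewrite s0 g20.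
  have B0 : Bm 0 = 0 by change (s (F1 0) = 0); rewrite F10 s0.
  have AS : forall B, B \in STS m -> A @: B \in STS m.
    move=> B hB; have -> : A @: B = g2 @: (s @: B) by rewrite -imset_comp.
    apply: (blocks_back F2g).
    by rewrite -hS; apply: blocks_mem.
  have BS : forall B, B \in STS m -> Bm @: B \in STS m.
    move=> B hB; have -> : Bm @: B = s @: (F1 @: B) by rewrite -imset_comp.
    by rewrite -hF; do 2 apply: blocks_mem.
  have AD := STS_additive Ai A0 AS.
  have BD := STS_additive Bi B0 BS.
  have hi : injective (A \o F1) by apply: inj_comp.
  have h0 : (A \o F1) 0 = 0 by change (A (F1 0) = 0); rewrite F10 A0.
  apply: (CCZ_of F1 F2 (@mkNZ_inj _ _ hi h0)) => c.
  have E : forall x, F2 (A (F1 x)) = Bm x by move=> x; change (F2 (g2 (s (F1 x))) = s (F1 x)); rewrite F2g'.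
  have S1 : \sum_x c x *: val (mkNZ hi h0 x) = A (\sum_x c x *: F1 (val x)).
    by rewrite (add_sum A AD A0).
  have S2 : \sum_x c x *: F2 (val (mkNZ hi h0 x)) = Bm (\sum_x c x *: val x).
    by rewrite (add_sum Bm BD B0); apply: eq_bigr => x _; rewrite -E.
  by rewrite S1 S2 !inj0 // andbC.
Qed.
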